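(* Let $m,n,w,d$ be positive integers with $1\le w\le m-1$. For all positive integers $l$ dividing $n$, all integers $0\le v\le l$, and all integers $\delta$ with $0\le \delta\le \frac{n}{l}\min\{v,l-v\}$, $$A(m,n,w,d)\le \frac{1}{\alpha\left(l,\frac{n}{l},v,\delta\right)}\left(\frac{m^l}{w^v(m-w)^{l-v}}\right)^{\frac{n}{l}} A\left((m-1)l,\frac{n}{l},lw-v,d-\delta\right).$$
   Context: $J(m,w)$ denotes the set of binary vectors of length $m$ and Hamming weight $w$. Elements of $J(m,w)^n$ are identified with $m\times n$ binary matrices all of whose columns have weight $w$, with distance the binary Hamming distance. $A(m,n,w,d)$ denotes the maximum cardinality of a nonempty subset of $J(m,w)^n$ in which any two distinct elements are at Hamming distance at least $2d$ (for $d\le 0$ this is just $\binom{m}{w}^n$). $\alpha(m,n,w,\delta)$ denotes the maximum cardinality of a subset of $J(m,w)^n$ in which any two elements are at Hamming distance at most $2\delta$ (so $\alpha(m,n,w,0)=1$ and $\alpha(m,n,w,nw)=\binom{m}{w}^n$). *)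

(* Defs.v *)
From HB Require Import structures.
From mathcomp Require Import all_boot all_order all_algebra.
Set Implicit Arguments. Unset Strict Implicit. Unset Printing Implicit Defensive.
Import Order.TTheory GRing.Theory Num.Theory.

(* Elements of J(m,w)^n: m x n binary matrices all of whose columns have weight w. *)
Definition colw_ok (m n w : nat) (X : 'M[bool]_(m, n)) : bool :=
  [forall j : 'I_n, #|[set i : 'I_m | X i j]| == w].

Definition hdist (m n : nat) (X Y : 'M[bool]_(m, n)) : nat :=
  #|[set ij : 'I_m * 'I_n | X ij.1 ij.2 != Y ij.1 ij.2]|.

Definition is_code (m n w : nat) (d : int) (C : {set 'M[bool]_(m, n)}) : bool :=
  [&& C != set0,
      [forall X in C, colw_ok w X] &
      [forall X in C, forall Y in C, (X != Y) ==> ((2 * d)%R <= (hdist X Y)%:Z)%R]].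

Definition Acode (m n w : nat) (d : int) : nat :=
  \max_(C : {set 'M[bool]_(m, n)} | is_code w d C) #|C|.

Definition is_anticode (m n w delta : nat) (C : {set 'M[bool]_(m, n)}) : bool :=
  [forall X in C, colw_ok w X] &&
  [forall X in C, forall Y in C, hdist X Y <= 2 * delta].

Definition alpha (m n w delta : nat) : nat :=
  \max_(C : {set 'M[bool]_(m, n)} | is_anticode w delta C) #|C|.

(* Main.v *)
Require Import Defs.
From mathcomp Require Import all_boot all_order all_algebra.
Import Order.TTheory GRing.Theory Num.Theory.
From mathcomp Require Import zify ring.
Set Implicit Arguments. Unset Strict Implicit. Unset Printing Implicit Defensive.
Definition inv2 a b (k : 'I_(a*b)) : 'I_a * 'I_b :=
  enum_val (cast_ord (esym (mxvec_cast a b)) k).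
Lemma inv2K a b (i : 'I_a) (j : 'I_b) : inv2 (mxvec_index i j) = (i, j).
Proof. by rewrite /inv2 /mxvec_index cast_ordK enum_rankK. Qed.
Lemma inv2K' a b (k : 'I_(a*b)) : mxvec_index (inv2 k).1 (inv2 k).2 = k.
Proof. by rewrite /mxvec_index -surjective_pairing enum_valK cast_ordKV. Qed.

Lemma big_mxvec R idx (op : Monoid.com_law idx) a b (F : 'I_(a*b) -> R) :
  \big[op/idx]_k F k = \big[op/idx]_(i < a) \big[op/idx]_(j < b) F (mxvec_index i j).
Proof.
rewrite pair_big /= (reindex (fun p : 'I_a * 'I_b => mxvec_index p.1 p.2)) //.
exists (@inv2 a b) => [p _|k _]; [by rewrite inv2K -surjective_pairing | exact: inv2K'].
Qed.

Lemma card_sumE (T : finType) (P : pred T) : #|[set x | P x]| = \sum_x (P x : nat).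
Proof.
rewrite -sum1_card big_mkcond /=; apply: eq_bigr => x _; rewrite inE; by case: (P x).
Qed.

Lemma hdistE m n (X Y : 'M[bool]_(m, n)) :
  hdist X Y = \sum_j \sum_i (X i j != Y i j : nat).
Proof. by rewrite /hdist card_sumE exchange_big pair_bigA. Qed.

Lemma colwE m n w (X : 'M[bool]_(m, n)) :
  colw_ok w X = [forall j, \sum_i (X i j : nat) == w].
Proof. by rewrite /colw_ok; apply: eq_forallb => j; rewrite card_sumE. Qed.
Section Key.
Variables (m1 l q : nat).
Local Notation M := m1.+1.
Local Notation N := (q * l)%N.
Implicit Types (X Y : 'M[bool]_(M, N)) (r : {ffun 'I_N -> 'I_M}).

Definition pat r X : 'M[bool]_(l, q) :=
  \matrix_(t, b) X (r (mxvec_index b t)) (mxvec_index b t).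
Definition phi r X : 'M[bool]_(m1 * l, q) := \matrix_(p, b)
   X (lift (r (mxvec_index b (inv2 p).2)) (inv2 p).1) (mxvec_index b (inv2 p).2).

Lemma colsplit (F : 'I_M -> nat) (i0 : 'I_M) :
  \sum_i F i = F i0 + \sum_(k < m1) F (lift i0 k).
Proof. by rewrite (bigD1_ord i0). Qed.

Lemma hdist_split r X Y :
  hdist X Y = hdist (phi r X) (phi r Y) + hdist (pat r X) (pat r Y).
Proof.
rewrite !hdistE.
under eq_bigr => j _ do rewrite (colsplit _ (r j)).
rewrite big_split /= addnC; congr (_ + _).
  rewrite big_mxvec; apply: eq_bigr => b _; rewrite big_mxvec exchange_big.
  apply: eq_bigr => t _; apply: eq_bigr => k _; by rewrite !mxE inv2K.
rewrite big_mxvec; apply: eq_bigr => b _.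
by apply: eq_bigr => t _; rewrite !mxE.
Qed.
Lemma colw_phi w v r X :
  colw_ok w X -> colw_ok v (pat r X) -> colw_ok (l * w - v) (phi r X).
Proof.
rewrite !colwE => /forallP hX /forallP hP; apply/forallP => b.
rewrite big_mxvec exchange_big /=.
have e t : \sum_k (phi r X (mxvec_index k t) b : nat) + pat r X t b = w.
  move/eqP: (hX (mxvec_index b t)); rewrite (colsplit _ (r (mxvec_index b t))) => <-.
  rewrite addnC; congr (_ + _); first by rewrite mxE.
  by apply: eq_bigr => k _; rewrite mxE inv2K.
have h1 : \sum_(t < l) (\sum_k (phi r X (mxvec_index k t) b : nat) + pat r X t b) = l * w.
  by rewrite (eq_bigr _ (fun t _ => e t)) sum_nat_const card_ord.
rewrite big_split /= in h1; move/eqP: (hP b) => hb.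
by apply/eqP; rewrite -h1 -hb addnK.
Qed.

Lemma phi_inj w r X Y :
  colw_ok w X -> colw_ok w Y -> phi r X = phi r Y -> X = Y.
Proof.
rewrite !colwE => /forallP hX /forallP hY e.
have ek j (k : 'I_m1) : X (lift (r j) k) j = Y (lift (r j) k) j.
  have := congr1 (fun Z : 'M[bool]_(m1 * l, q) => Z (mxvec_index k (inv2 j).2) (inv2 j).1) e.
  by rewrite !mxE inv2K /= inv2K'.
apply/matrixP => i j; case: (unliftP (r j) i) => [k ->|->]; first exact: ek.
move: (hX j) (hY j); rewrite !(colsplit _ (r j)) (eq_bigr _ (fun k _ => congr1 nat_of_bool (ek j k))).
by case: (X (r j) j); case: (Y (r j) j) => //= /eqP <- /eqP; lia.
Qed.
Lemma cnt (T : finType) (P : pred T) c :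
  #|(fun i => P i == c)| = if c then #|[set i | P i]| else #|T| - #|[set i | P i]|.
Proof.
case: c.
  apply: eq_card => i; rewrite unfold_in inE /=; by case: (P i).
have := cardC [pred i | P i] => <-.
have -> : #|[set i | P i]| = #|[pred i | P i]| by apply: eq_card => i; rewrite inE.
rewrite addKn; apply: eq_card => i; rewrite unfold_in !inE /=; by case: (P i).
Qed.

Lemma prod_cond_const (T : finType) (P : pred T) n :
  \prod_(i | P i) n = n ^ #|[set i | P i]|.
Proof.
rewrite -prod_nat_const; apply: eq_bigl => i; by rewrite inE.
Qed.

Lemma count1 w v X (x : 'M[bool]_(l, q)) : colw_ok w X -> colw_ok v x ->
  \sum_r (pat r X == x : nat) = (w ^ v * (M - w) ^ (l - v)) ^ q.
Proof.
move=> /forallP hX /forallP hx.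
rewrite -card_sumE.
have -> : #|[set r | pat r X == x]| =
   #|family (fun j : 'I_N => [pred i | X i j == x (inv2 j).2 (inv2 j).1])|.
  apply: eq_card => r; rewrite inE; apply/eqP/familyP => [e j|H].
    have := congr1 (fun Z : 'M[bool]_(l, q) => Z (inv2 j).2 (inv2 j).1) e.
    by rewrite mxE inv2K' inE => ->.
  apply/matrixP => t b; rewrite mxE.
  by have := H (mxvec_index b t); rewrite inE inv2K => /eqP.
rewrite card_family foldrE big_image /= big_mxvec.
have -> : (w ^ v * (M - w) ^ (l - v)) ^ q = \prod_(b < q) (w ^ v * (M - w) ^ (l - v)).
  by rewrite prod_nat_const card_ord.
apply: eq_bigr => b _.
under eq_bigr => t _ do rewrite inv2K /= cnt card_ord (eqP (hX _)).
rewrite (bigID (fun t => x t b)) /=.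
rewrite (eq_bigr (fun _ => w)); last by move=> t ->.
rewrite [X in _ * X](eq_bigr (fun _ => M - w)); last by move=> t /= /negbTE ->.
rewrite !prod_cond_const.
have hc : #|[pred t | x t b]| + #|[predC [pred t | x t b]]| = l by rewrite cardC card_ord.
have e1 : #|[pred t | x t b]| = v by rewrite -(eqP (hx b)); apply: eq_card => t; rewrite inE.
have e2 : #|[set i | x i b]| = v by rewrite (eqP (hx b)).
have e3 : #|[set i | ~~ x i b]| = l - v.
  rewrite -[in RHS]hc e1 addKn; apply: eq_card => t; by rewrite !inE.
by rewrite e2 e3.
Qed.
Lemma countS w v X (S : {set 'M[bool]_(l, q)}) : colw_ok w X -> [forall x in S, colw_ok v x] ->
  \sum_r (pat r X \in S : nat) = #|S| * (w ^ v * (M - w) ^ (l - v)) ^ q.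
Proof.
move=> hX /forall_inP hS.
have -> : \sum_r (pat r X \in S : nat) = \sum_(x in S) \sum_r (pat r X == x : nat).
  rewrite exchange_big /=; apply: eq_bigr => r _.
  case h: (pat r X \in S).
    rewrite (bigD1 (pat r X)) //= eqxx big1 // => x /andP[_ /negbTE].
    by rewrite eq_sym => ->.
  rewrite big1 // => x xS; case: eqP => // e; by rewrite e xS in h.
rewrite (eq_bigr (fun _ => (w ^ v * (M - w) ^ (l - v)) ^ q)); first by rewrite sum_nat_const.
move=> x xS; exact: count1 (hS x xS).
Qed.

Lemma key w v d delta r (C : {set 'M[bool]_(M, N)}) (S : {set 'M[bool]_(l, q)}) : is_code w d%:Z C -> is_anticode v delta S ->
  \sum_(c in C) (pat r c \in S : nat) <=
    Acode (m1 * l) q (l * w - v) (d%:Z - delta%:Z).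
Proof.
case/and3P => _ /forall_inP hC /forall_inP hd /andP[/forall_inP hS /forall_inP hSd].
set D := [set c in C | pat r c \in S].
have -> : \sum_(c in C) (pat r c \in S : nat) = #|D|.
  rewrite /D card_sumE big_mkcond /=; apply: eq_bigr => c _.
  by case: (c \in C).
case: (eqVneq D set0) => [->|Dn0]; first by rewrite cards0.
have inj : {in D &, injective (phi r)}.
  move=> X Y; rewrite !inE => /andP[XC _] /andP[YC _]; apply: phi_inj; [exact: hC | exact: hC].
rewrite -(card_in_imset inj); apply: leq_bigmax_cond.
apply/and3P; split.
- apply/set0Pn; case/set0Pn: Dn0 => X XD; exists (phi r X); exact: imset_f.
- apply/forall_inP => Z /imsetP[X]; rewrite inE => /andP[XC XS] ->.
  apply: colw_phi; [exact: hC | exact: hS].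
- apply/forall_inP => Z /imsetP[X]; rewrite inE => /andP[XC XS] ->.
  apply/forall_inP => Z' /imsetP[Y]; rewrite inE => /andP[YC YS] ->.
  apply/implyP => ne.
  have XY : X != Y by apply: contraNneq ne => ->.
  have h1 := implyP (forall_inP (hd X XC) Y YC) XY.
  have h2 := forall_inP (hSd _ XS) _ YS.
  have h3 := hdist_split r X Y.
  lia.
Qed.

Lemma main w v d delta (C : {set 'M[bool]_(M, N)}) (S : {set 'M[bool]_(l, q)}) : is_code w d%:Z C -> is_anticode v delta S ->
  #|C| * #|S| * (w ^ v * (M - w) ^ (l - v)) ^ q <=
    M ^ N * Acode (m1 * l) q (l * w - v) (d%:Z - delta%:Z).
Proof.
move=> hC hS.
have /and3P[_ /forall_inP cw _] := hC.
have /andP[sw _] := hS.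
have e : \sum_r \sum_(c in C) (pat r c \in S : nat) =
    #|C| * (#|S| * (w ^ v * (M - w) ^ (l - v)) ^ q).
  rewrite exchange_big /= (eq_bigr (fun _ => #|S| * (w ^ v * (M - w) ^ (l - v)) ^ q)).
    by rewrite sum_nat_const.
  move=> c cC; exact: countS (cw c cC) sw.
rewrite -mulnA -e.
have -> : M ^ N * Acode (m1 * l) q (l * w - v) (d%:Z - delta%:Z) =
   \sum_(r : {ffun 'I_N -> 'I_M}) Acode (m1 * l) q (l * w - v) (d%:Z - delta%:Z).
  by rewrite sum_nat_const card_ffun !card_ord mulnC.
apply: leq_sum => r _; exact: key.
Qed.
End Key.
Unset Implicit Arguments.
Local Open Scope ring_scope.
Theorem proposition3 (m n w d : nat) :
  (0 < m)%N -> (0 < n)%N -> (0 < d)%N -> (1 <= w)%N -> (w <= m - 1)%N ->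
  forall (l v delta : nat),
    (0 < l)%N -> (l %| n)%N -> (v <= l)%N ->
    (delta <= (n %/ l) * minn v (l - v))%N ->
    ((Acode m n w d%:Z)%:R : rat) <=
      ((alpha l (n %/ l) v delta)%:R)^-1 *
      (((m%:R : rat) ^+ l / ((w%:R : rat) ^+ v * ((m - w)%:R : rat) ^+ (l - v)))
         ^+ (n %/ l)) *
      (Acode ((m - 1) * l) (n %/ l) (l * w - v) (d%:Z - delta%:Z))%:R.
Proof.
move=> m0 n0 d0 w1 wm l v delta l0 ln vl _.
case: m m0 wm => // m1 _; rewrite !subn1 /= => wm.
move: (n %/ l)%N (divnK ln) => q hn; subst n.
set x0 : 'M[bool]_(l, q) := \matrix_(t, b) (t < v)%N.
have x0a : is_anticode v delta [set x0].
  apply/andP; split; apply/forall_inP => X; rewrite inE => /eqP ->.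
    apply/forallP => b.
    have -> : [set t | x0 t b] = [set widen_ord vl t | t : 'I_v].
      apply/setP => t; rewrite !inE mxE; apply/idP/imsetP => [tv|[u _ ->]].
        by exists (Ordinal tv) => //; apply: val_inj.
      by rewrite /= ltn_ord.
    by rewrite card_imset ?card_ord //; by move=> a1 a2 /(congr1 val) /= /val_inj.
  apply/forall_inP => Y; rewrite inE => /eqP ->.
  by rewrite hdistE big1 // => j _; rewrite big1 // => i _; rewrite eqxx.
set K := (w ^ v * (m1.+1 - w) ^ (l - v))%N.
set A' := Acode (m1 * l) q (l * w - v) (d%:Z - delta%:Z).
have a1 : (1 <= alpha l q v delta)%N.
  by have := @leq_bigmax_cond _ _ (fun S : {set 'M[bool]_(l, q)} => #|S|) _ x0a; rewrite cards1.
have [S Sa eS] : {S : {set 'M[bool]_(l, q)} | S \in [pred S | is_anticode v delta S] &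
     alpha l q v delta = #|S| }.
  have hp : (0 < #|[pred S : {set 'M[bool]_(l, q)} | is_anticode v delta S]|)%N.
    by apply/card_gt0P; exists [set x0].
  have [S Sa eS] := @eq_bigmax_cond _ [pred S : {set 'M[bool]_(l, q)} | is_anticode v delta S]
       (fun S => #|S|) hp.
  by exists S.
have hnat : (Acode m1.+1 (q * l) w d * alpha l q v delta * K ^ q <= m1.+1 ^ (q * l) * A')%N.
  have [hp|] := posnP #|[pred C : {set 'M[bool]_(m1.+1, q * l)} | is_code w d%:Z C]|.
    rewrite /Acode big_pred0 ?mul0n // => C.
    by have := card0_eq hp C; rewrite inE.
  move=> hp.
  have [C Cc eC] := @eq_bigmax_cond _ [pred C : {set 'M[bool]_(m1.+1, q * l)} | is_code w d%:Z C]
       (fun C => #|C|) hp.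
  have eC' : Acode m1.+1 (q * l) w d = #|C| by exact: eC.
  rewrite eC' eS.
  exact: main Cc Sa.
have wpos : (0 < m1.+1 - w)%N by rewrite subn_gt0 ltnS.
have Kpos : (0 < K ^ q)%N by rewrite expn_gt0 muln_gt0 !expn_gt0 w1 wpos.
have : ((Acode m1.+1 (q * l) w d)%:R * ((alpha l q v delta)%:R * (K ^ q)%:R)
          <= (m1.+1%:R ^+ l) ^+ q * A'%:R :> rat).
  by rewrite -!natrM -!natrX -natrM ler_nat -expnM (mulnC l q) mulnA.
rewrite -ler_pdivlMr; last by rewrite mulr_gt0 // ltr0n.
move/le_trans; apply.
rewrite natrX /K natrM !natrX expr_div_n.
rewrite le_eqVlt; apply/orP; left; apply/eqP.
rewrite invfM; ring.
Qed.
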